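(* Let $G$ be an interval graph and let $[C_1,\ldots,C_t]$ be a consecutive clique arrangement of $G$ with $|C_1|\ge 3$. For a vertex $v$ let $r(v)=\max\{i : v\in C_i\}$, order the vertices of $C_1$ by nondecreasing $r(v)$, and let $\alpha,\beta,\gamma$ be the first three vertices of $C_1$ in this ordering. If $\mathcal{P}$ is a triangle packing of $G$ in which $\alpha$ is covered by a triangle, then there is a triangle packing $\mathcal{P}'$ of $G$ with $|\mathcal{P}'|=|\mathcal{P}|$ such that $\{\alpha,\beta,\gamma\}$ is one of the triangles of $\mathcal{P}'$.
   Context: A graph is an interval graph if it is the intersection graph of a finite collection of intervals on the real line. A consecutive clique arrangement of a graph $G$ is a linear ordering $[C_1,\ldots,C_t]$ of all maximal cliques of $G$ such that for each vertex $v$, the cliques containing $v$ are consecutive in the ordering. A triangle packing is a collection of pairwise vertex-disjoint triangles. *)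

(* Defs.v *)
From HB Require Import structures.
From mathcomp Require Import all_boot all_order all_algebra.
Set Implicit Arguments. Unset Strict Implicit. Unset Printing Implicit Defensive.
Import Order.TTheory GRing.Theory Num.Theory.

Definition simple_graph (T : finType) (e : rel T) : Prop :=
  symmetric e /\ irreflexive e.

Definition interval_graph (T : finType) (e : rel T) : Prop :=
  exists lo hi : T -> rat,
    (forall v, (lo v <= hi v)%R) /\
    (forall u v, u != v -> e u v = ((lo u <= hi v)%R && (lo v <= hi u)%R)).

Definition is_clique (T : finType) (e : rel T) (Q : {set T}) : bool :=
  [forall u in Q, forall v in Q, (u != v) ==> e u v].

Definition maximal_clique (T : finType) (e : rel T) (Q : {set T}) : bool :=
  is_clique e Q && [forall Q' : {set T}, (Q \proper Q') ==> ~~ is_clique e Q'].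

(* [C_1, ..., C_t] is represented by s with C_(i+1) = nth set0 s i. *)
Definition consecutive_clique_arrangement (T : finType) (e : rel T)
    (s : seq {set T}) : Prop :=
  uniq s /\
  (forall Q : {set T}, (Q \in s) = maximal_clique e Q) /\
  (forall (v : T) (i j k : nat), (i <= j <= k)%N -> (k < size s)%N ->
     v \in nth set0 s i -> v \in nth set0 s k -> v \in nth set0 s j).

(* r(v) = max index of a clique containing v (0-based). *)
Definition rlast (T : finType) (s : seq {set T}) (v : T) : nat :=
  (\max_(i < size s | v \in nth set0 s i) (i : nat))%N.

Definition is_triangle (T : finType) (e : rel T) (X : {set T}) : bool :=
  (#|X| == 3%N) && is_clique e X.

Definition triangle_packing (T : finType) (e : rel T) (P : {set {set T}}) : Prop :=
  (forall X, X \in P -> is_triangle e X) /\ trivIset P.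

(* Main.v *)
Require Import Defs.
From HB Require Import structures.
From mathcomp Require Import all_boot all_order all_algebra.

Definition sw (T : eqType) (a b : T) (u : T) : T :=
  if u == a then b else if u == b then a else u.
Arguments sw {T}.

Lemma swK (T : eqType) (a b : T) : involutive (sw a b).
Proof.
move=> u; rewrite /sw.
case: (eqVneq u a) => [->|ua]; first by case: (eqVneq b a) => [->|ba]; rewrite ?eqxx.
case: (eqVneq u b) => [->|ub]; first by rewrite eqxx.
by rewrite (negPf ua) (negPf ub).
Qed.

Lemma swap_ok (T : finType) (e : rel T) (P : {set {set T}}) (X0 : {set T}) (a b : T) :
  symmetric e -> triangle_packing e P -> X0 \in P -> a \in X0 ->
  (forall u, u \in X0 -> u != a -> e b u) ->
  (forall u, e b u -> u != a -> e a u) ->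
  exists P' : {set {set T}}, [/\ triangle_packing e P', #|P'| = #|P| &
     exists2 X', X' \in P' & forall u, (u \in X') = (sw a b u \in X0)].
Proof.
move=> esym [Ptri Ptriv] X0P aX0 H1 H2.
set f := sw a b.
have fK : involutive f := @swK _ a b.
have finj : injective f := inv_inj fK.
have memf : forall (X : {set T}) u, (u \in f @: X) = (f u \in X).
  move=> X u; apply/imsetP/idP => [[x xX ->]|fu]; first by rewrite fK.
  by exists (f u); rewrite ?fK.
have imf_inj : injective (fun X : {set T} => f @: X).
  move=> X Y /setP eXY; apply/setP => u.
  by have := eXY (f u); rewrite !memf !fK.
exists ((fun X : {set T} => f @: X) @: P); split.
- split.
  + move=> Y /imsetP [X XP ->].
    have /andP [c3 cl] := Ptri X XP.
    rewrite /is_triangle card_imset // c3 /=.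
    have exy : forall x y, x \in X -> y \in X -> x != y -> e x y.
      move=> x y xX yX xy.
      by move/forallP: cl => /(_ x) /implyP /(_ xX) /forallP /(_ y) /implyP /(_ yX) /implyP /(_ xy).
    have gen : forall x y, x \in X -> y \in X -> x != y -> y != a -> y != b -> e (f x) y.
      move=> x y xX yX xy ya yb; rewrite /f /sw.
      case: (eqVneq x a) => [xa|xa].
        subst x.
        case: (eqVneq X X0) => [XX0|XX0].
          by subst X; apply: H1.
        have := (trivIsetP Ptriv) X X0 XP X0P XX0.
        by move/disjointFr => /(_ a xX); rewrite aX0.
      case: (eqVneq x b) => [xb|xb].
        subst x; apply: H2 => //; exact: exy.
      exact: exy.
    apply/forallP => u; apply/implyP => /imsetP [x xX ->].
    apply/forallP => v; apply/implyP => /imsetP [y yX ->].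
    apply/implyP => fxy.
    have xy : x != y by apply: contraNneq fxy => ->.
    have fy : y != a -> y != b -> f y = y.
      by move=> ya yb; rewrite /f /sw (negPf ya) (negPf yb).
    have fx : x != a -> x != b -> f x = x.
      by move=> ya yb; rewrite /f /sw (negPf ya) (negPf yb).
    case: (eqVneq y a) => [ya|ya]; last case: (eqVneq y b) => [yb|yb].
    * case: (eqVneq x a) => [xa|xa]; first by rewrite xa ya eqxx in xy.
      case: (eqVneq x b) => [xb|xb].
        subst x y; rewrite /f /sw eqxx (negPf xy) eqxx esym.
        exact: exy.
      rewrite fx // esym; apply: gen => //; by rewrite eq_sym.
    * case: (eqVneq x b) => [xb|xb]; first by rewrite xb yb eqxx in xy.
      case: (eqVneq x a) => [xa|xa].
        subst x y; rewrite /f /sw eqxx eq_sym (negPf xy) eqxx esym.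
        exact: exy.
      rewrite fx // esym; apply: gen => //; by rewrite eq_sym.
    * rewrite fy //; exact: gen.
  + apply/trivIsetP => A B /imsetP [X XP ->] /imsetP [Y YP ->] AB.
    have XY : X != Y by apply: contraNneq AB => ->.
    have := (trivIsetP Ptriv) X Y XP YP XY.
    rewrite -!setI_eq0 -imsetI; last by move=> x y _ _; apply: finj.
    by move/eqP => ->; rewrite imset0.
- by rewrite card_imset.
- exists (f @: X0); first by apply/imsetP; exists X0.
  by move=> u; rewrite memf.
Qed.

Lemma pick3 (T : finType) (X : {set T}) (x y : T) :
  #|X| = 3 -> exists z, [/\ z \in X, z != x & z != y].
Proof.
move=> c3.
have : (0 < #|X :\ x :\ y|)%N.
  move: c3; rewrite (cardsD1 x X) (cardsD1 y (X :\ x)) => h.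
  rewrite lt0n; apply/eqP => h0; move: h; rewrite h0 addn0.
  by case: (x \in X); case: (y \in X :\ x).
case/card_gt0P => z; rewrite !inE => /and3P [zy zx zX].
by exists z.
Qed.

Theorem mainTheorem4 (T : finType) (e : rel T) (s : seq {set T})
    (alpha beta gamma : T) (P : {set {set T}}) :
  simple_graph e ->
  interval_graph e ->
  consecutive_clique_arrangement e s ->
  (3 <= #|nth set0 s 0|)%N ->
  alpha \in nth set0 s 0 -> beta \in nth set0 s 0 -> gamma \in nth set0 s 0 ->
  alpha != beta -> alpha != gamma -> beta != gamma ->
  (rlast s alpha <= rlast s beta)%N ->
  (rlast s beta <= rlast s gamma)%N ->
  (forall w, w \in nth set0 s 0 -> w \notin [set alpha; beta; gamma] ->
     (rlast s gamma <= rlast s w)%N) ->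
  triangle_packing e P ->
  (exists2 X, X \in P & alpha \in X) ->
  exists P' : {set {set T}},
    [/\ triangle_packing e P', #|P'| = #|P| & [set alpha; beta; gamma] \in P'].
Proof.
move=> [esym eirr] _ [su [smax scons]] c3 aC bC cC ab ac bc rab rbc rw Ppk [X0 X0P aX0].
set C := nth set0 s 0 in c3 aC bC cC rw.
have s0 : (0 < size s)%N by move: c3; rewrite /C; case: (s) => //; rewrite cards0.
have inmax : forall i v, v \in nth set0 s i -> (i < size s)%N.
  move=> i v; case: (ltnP i (size s)) => // h; by rewrite nth_default // inE.
have ismax : forall i, (i < size s)%N -> maximal_clique e (nth set0 s i).
  by move=> i hi; rewrite -smax mem_nth.
have clq : forall Q u v, maximal_clique e Q -> u \in Q -> v \in Q -> u != v -> e u v.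
  move=> Q u v /andP [cl _] uQ vQ uv.
  by move/forallP: cl => /(_ u) /implyP /(_ uQ) /forallP /(_ v) /implyP /(_ vQ) /implyP /(_ uv).
have rl_ge : forall v i, v \in nth set0 s i -> (i <= rlast s v)%N.
  move=> v i vi; have ilt := inmax i v vi.
  have := (leq_bigmax_cond (P := fun j : 'I_(size s) => v \in nth set0 s j)
            (F := fun j : 'I_(size s) => nat_of_ord j) (Ordinal ilt) vi).
  by rewrite /rlast.
have rl_in : forall v, v \in C -> v \in nth set0 s (rlast s v).
  move=> v vC.
  have : (0 < #|[pred j : 'I_(size s) | v \in nth set0 s j]|)%N.
    by apply/card_gt0P; exists (Ordinal s0).
  case/(eq_bigmax_cond (fun j : 'I_(size s) => nat_of_ord j)) => j jin eqj.
  have -> : rlast s v = j by rewrite /rlast -eqj; apply: eq_bigl.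
  exact: jin.
have edge_clq : forall u v, u != v -> e u v ->
    exists2 i, (i < size s)%N & (u \in nth set0 s i) && (v \in nth set0 s i).
  move=> u v uv euv.
  have pc : is_clique e [set u; v].
    apply/forallP => x; apply/implyP; rewrite !inE => /orP [] /eqP ->;
    apply/forallP => y; apply/implyP; rewrite !inE => /orP [] /eqP ->;
    rewrite ?eqxx //= ?euv ?implybT //.
    by rewrite (esym v u) euv implybT.
  have [A mA sA] := @maxset_exists _ [pred Q | is_clique e Q] _ pc.
  have mcA : maximal_clique e A.
    move/maxsetP: mA => [cA supA]; apply/andP; split => //.
    apply/forallP => Q; apply/implyP; rewrite properE => /andP [AQ QA].
    apply/negP => cQ; have := supA Q cQ AQ => QeA.
    by rewrite QeA subxx in QA.
  have As : A \in s by rewrite smax.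
  exists (index A s); first by rewrite index_mem.
  by rewrite nth_index // (subsetP sA u) ?(subsetP sA v) // !inE eqxx ?orbT.
have dom : forall v w u, v \in C -> w \in C -> (rlast s v <= rlast s w)%N ->
    e v u -> u != w -> e w u.
  move=> v w u vC wC rvw evu uw.
  have vu : v != u by apply: contraTneq evu => ->; rewrite eirr.
  have [i ilt /andP [vi ui]] := edge_clq v u vu evu.
  have iw : (i <= rlast s w)%N := leq_trans (rl_ge v i vi) rvw.
  have wr := rl_in w wC.
  have wi : w \in nth set0 s i.
    apply: (scons w 0 i (rlast s w)) => //.
    exact: inmax wr.
  by apply: (clq _ w u (ismax i ilt)) => //; rewrite eq_sym.
have ra0 : rlast s alpha = 0.
  apply/eqP; rewrite -leqn0 leqNgt; apply/negP => ra.
  have rge : forall w, w \in C -> (0 < rlast s w)%N.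
    move=> w wC; case: (boolP (w \in [set alpha; beta; gamma])).
      rewrite !inE => /orP [/orP [] |] /eqP ->.
      * exact: ra.
      * exact: leq_trans ra rab.
      * exact: leq_trans ra (leq_trans rab rbc).
    by move/(rw w wC); apply: leq_trans; apply: leq_trans ra (leq_trans rab rbc).
  have s1 : (1 < size s)%N.
    exact: leq_ltn_trans (rge alpha aC) (inmax _ _ (rl_in alpha aC)).
  have CS1 : C \subset nth set0 s 1.
    apply/subsetP => w wC.
    have wr := rl_in w wC.
    apply: (scons w 0 1 (rlast s w)) => //; first by rewrite rge.
    exact: inmax wr.
  have CeQ : C = nth set0 s 1.
    apply/eqP; rewrite eqEsubset CS1 /=; apply/negPn/negP => nsub.
    have /andP [_ /forallP /(_ (nth set0 s 1))] := ismax 0 s0.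
    rewrite properE CS1 nsub /=.
    by have /andP [-> _] := ismax 1 s1.
  by move/eqP: CeQ; rewrite /C nth_uniq.
have NA : forall u, e alpha u -> u \in C.
  move=> u eau.
  have au : alpha != u by apply: contraTneq eau => <-; rewrite eirr.
  have [i ilt /andP [ai ui]] := edge_clq alpha u au eau.
  have := rl_ge alpha i ai; rewrite ra0 leqn0 => /eqP i0.
  by rewrite /C -i0.
have CC : forall u v, u \in C -> v \in C -> u != v -> e u v.
  move=> u v; exact: clq (ismax 0 s0).
have triC : forall X, is_triangle e X -> alpha \in X -> X \subset C.
  move=> X /andP [_ cl] aX; apply/subsetP => x xX.
  case: (eqVneq x alpha) => [->//|xa]; apply: NA.
  by move/forallP: cl => /(_ alpha) /implyP /(_ aX) /forallP /(_ x) /implyP /(_ xX) /implyP; apply; rewrite eq_sym.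
have step : forall P X b z, triangle_packing e P -> X \in P -> alpha \in X ->
    b \in C -> b \notin X -> z \in X -> z != alpha -> (rlast s b <= rlast s z)%N ->
    exists P' : {set {set T}}, [/\ triangle_packing e P', #|P'| = #|P| &
     exists2 X', X' \in P' & forall u, (u \in X') = (sw z b u \in X)].
  move=> Q X b z Qpk XQ aX bCC bX zX za rbz.
  have XC := triC X (Qpk.1 X XQ) aX.
  apply: swap_ok => //.
    move=> u uX uz; apply: CC => //; first exact: (subsetP XC).
    by apply: contraNneq bX => ->.
  move=> u ebu uz; apply: (dom b) => //; exact: (subsetP XC).
have tri3 : forall Q X, triangle_packing e Q -> X \in Q -> #|X| = 3.
  by move=> Q X [Qt _] XQ; have /andP [/eqP -> _] := Qt X XQ.
have [P1 [X1 [[pk1 cd1] [X1P1 [aX1 bX1]]]]] : exists (P1 : {set {set T}}) (X1 : {set T}),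
    (triangle_packing e P1 /\ #|P1| = #|P|) /\ (X1 \in P1 /\ (alpha \in X1 /\ beta \in X1)).
  case: (boolP (beta \in X0)) => bX0; first by exists P, X0.
  have [z [zX za zc]] := @pick3 _ X0 alpha gamma (tri3 _ _ Ppk X0P).
  have zb : z != beta by apply: contraNneq bX0 => <-.
  have zC : z \in C := subsetP (triC X0 (Ppk.1 X0 X0P) aX0) z zX.
  have rbz : (rlast s beta <= rlast s z)%N.
    apply: leq_trans rbc (rw z zC _).
    by rewrite !inE !negb_or za zb zc.
  have [P' [pk' cd' [X' X'P mem]]] := step P X0 beta z Ppk X0P aX0 bC bX0 zX za rbz.
  exists P', X'; split; first by split.
  split => //; split; rewrite mem /sw.
    by rewrite eq_sym (negPf za) (negPf ab).
  by rewrite eq_sym (negPf zb) eqxx.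
have [P2 [X2 [[pk2 cd2] [X2P2 [aX2 [bX2 cX2]]]]]] : exists (P2 : {set {set T}}) (X2 : {set T}),
    (triangle_packing e P2 /\ #|P2| = #|P|) /\
    (X2 \in P2 /\ (alpha \in X2 /\ beta \in X2 /\ gamma \in X2)).
  case: (boolP (gamma \in X1)) => cX1; first by exists P1, X1.
  have [z [zX za zb]] := @pick3 _ X1 alpha beta (tri3 _ _ pk1 X1P1).
  have zc : z != gamma by apply: contraNneq cX1 => <-.
  have zC : z \in C := subsetP (triC X1 (pk1.1 X1 X1P1) aX1) z zX.
  have rcz : (rlast s gamma <= rlast s z)%N.
    by apply: rw => //; rewrite !inE !negb_or za zb zc.
  have [P' [pk' cd' [X' X'P mem]]] := step P1 X1 gamma z pk1 X1P1 aX1 cC cX1 zX za rcz.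
  exists P', X'; split; first by split => //; rewrite cd'.
  split => //; split; [|split]; rewrite mem /sw.
  - by rewrite eq_sym (negPf za) (negPf ac).
  - by rewrite eq_sym (negPf zb) (negPf bc).
  - by rewrite eq_sym (negPf zc) eqxx.
exists P2; split => //.
have -> : [set alpha; beta; gamma] = X2 => //.
apply/eqP; rewrite eqEcard; apply/andP; split.
  by apply/subsetP => x; rewrite !inE => /orP [/orP [] |] /eqP ->.
rewrite (tri3 _ _ pk2 X2P2) setUC cardsU1 cards2 !inE ab negb_or eq_sym ac eq_sym bc.
by [].
Qed.
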